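(* In the setting below, for every $\varepsilon>0$ and $v>0$ there exists $\kappa>0$ such that for all sufficiently large $t$, $$\mathbb P\Big(\max_{n\in\mathbb N,\ n_t(-v)\le n\le n_t(v)}\frac{F_n-g(\log(n\sqrt{\sigma_t}))}{g'(\log(n\sqrt{\sigma_t}))}\le\kappa\Big)\ge1-\varepsilon,$$ where $n_t(\pm v)=\exp\{\lambda(\sigma_t\pm v\sqrt{\sigma_t})\}$.
   Context: Let $\lambda>0$. Let $\mu$ be a probability distribution on $(0,1)$ such that $m(x)=-\log\mu((x,1))$, $x\in[0,1)$, is twice differentiable on $[0,1)$ with $m'>0$, $m''>0$, $\lim_{x\uparrow1}m''(x)/(m'(x))^2=0$, $\lim_{x\uparrow1}m''(x)m(x)x/(m'(x))^2=\varkappa>0$, and $\lim_{x\uparrow1}m(x)/m'(x)=0$. Let $g=m^{-1}:[0,\infty)\to[0,1)$; for large $t$ let $x_t\in[0,t)$ be the unique solution of $(\log g)'(\lambda x)=\frac1{\lambda(t-x)}$ and $\sigma_t=\max\{1,x_t\}$. Let $(F_n)_{n\ge1}$ be i.i.d. with law $\mu$. *)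

(* Defs.v *)
From HB Require Import structures.
From mathcomp Require Import all_boot all_order all_algebra.
From mathcomp Require Import all_classical all_reals all_analysis.
Set Implicit Arguments. Unset Strict Implicit. Unset Printing Implicit Defensive.
Import Order.TTheory GRing.Theory Num.Theory.
Import numFieldNormedType.Exports.
Local Open Scope classical_set_scope.
Local Open Scope ring_scope.

Definition mfun_of {R : realType} (mu : probability R R) (x : R) : R :=
  - ln (fine (mu [set y : R | x < y < 1])).

Definition sigma_of {R : realType} (xt : R -> R) (t : R) : R := Num.max 1 (xt t).

Definition n_of {R : realType} (lambda : R) (xt : R -> R) (t v : R) : R :=
  expR (lambda * (sigma_of xt t + v * Num.sqrt (sigma_of xt t))).

Definition iid_with_law {d} {T : measurableType d} {R : realType}
  (P : probability T R) (F : nat -> T -> R) (mu : probability R R) : Prop :=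
  (forall n, measurable_fun setT (F n)) /\
  (forall n (B : set R), measurable B -> P (F n @^-1` B) = mu B) /\
  (forall (s : seq nat) (B : nat -> set R), uniq s ->
     (forall i, measurable (B i)) ->
     P (\bigcap_(i in [set` s]) (F i @^-1` B i)) =
       (\prod_(i <- s) P (F i @^-1` B i))%E).

(* Main.v *)
Require Import Defs.
From HB Require Import structures.
From mathcomp Require Import all_boot all_order all_algebra.
From mathcomp Require Import all_classical all_reals all_analysis.
From mathcomp Require Import ring lra.
Import Order.TTheory GRing.Theory Num.Theory.
Import numFieldNormedType.Exports.
Local Open Scope classical_set_scope.
Local Open Scope ring_scope.
Set Implicit Arguments. Unset Strict Implicit.



Lemma mvt01 (R : realType) (f f' : R -> R) (a b : R) : 0 < a -> a < b -> b < 1 ->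
  (forall x : R, 0 < x < 1 -> is_derive x 1 f (f' x)) ->
  exists2 c, a < c < b & f b - f a = f' c * (b - a).
Proof.
move=> a0 ab b1 hd.
have hd' : forall x, x \in `]a, b[ -> is_derive x 1 f (f' x).
  move=> x; rewrite in_itv /= => /andP[ax xb]; apply: hd.
  apply/andP; split; lra.
have hc : {within `[a, b], continuous f}.
  apply: derivable_within_continuous => x; rewrite in_itv /= => /andP[ax xb].
  apply: (@ex_derive _ _ _ _ _ _ (f' x)); apply: hd; apply/andP; split; lra.
have [c] := MVT ab hd' hc.
rewrite in_itv /= => cab e; by exists c.
Qed.

Lemma tangent01 (R : realType) (m m1 m2 : R -> R) (a b : R) : 0 < a -> a < b -> b < 1 ->
  (forall x : R, 0 < x < 1 -> is_derive x 1 m (m1 x)) ->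
  (forall x : R, 0 < x < 1 -> is_derive x 1 m1 (m2 x)) ->
  (forall x : R, 0 <= x < 1 -> 0 < m2 x) ->
  m a + m1 a * (b - a) <= m b.
Proof.
move=> a0 ab b1 h1 h2 hp.
have [c /andP[ac cb] e] := @mvt01 R m m1 a b a0 ab b1 h1.
have [w /andP[aw wc] e2] := @mvt01 R m1 m2 a c a0 ac (lt_trans cb b1) h2.
have : 0 < m2 w by apply: hp; apply/andP; split; lra.
move=> hw.
have : m1 a <= m1 c.
  rewrite -subr_ge0 e2; apply: mulr_ge0; lra.
move=> hac.
have : m1 a * (b - a) <= m1 c * (b - a) by apply: ler_wpM2r; lra.
lra.
Qed.

Lemma strict01 (R : realType) (m m1 : R -> R) (a b : R) : 0 < a -> a < b -> b < 1 ->
  (forall x : R, 0 < x < 1 -> is_derive x 1 m (m1 x)) ->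
  (forall x : R, 0 <= x < 1 -> 0 < m1 x) -> m a < m b.
Proof.
move=> a0 ab b1 h1 hp.
have [c /andP[ac cb] e] := @mvt01 R m m1 a b a0 ab b1 h1.
have : 0 < m1 c by apply: hp; apply/andP; split; lra.
move=> hc.
have : 0 < m1 c * (b - a) by apply: mulr_gt0; lra.
lra.
Qed.

Lemma set_oo (R : realType) (x y : R) : [set z : R | x < z < y] = [set` `]x, y[].
Proof. by apply/seteqP; split => z; rewrite /= in_itv. Qed.

Lemma mu_expR (R : realType) (mu : probability R R) (x : R) :
  (0 < mu [set y : R | (x < y < 1)%R])%E ->
  mu [set y : R | x < y < 1] = (expR (- mfun_of mu x))%:E.
Proof.
move=> hp.
have hm : measurable [set y : R | x < y < 1] by rewrite set_oo; exact: measurable_itv.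
have hle := probability_le1 mu hm.
have hf : mu [set y : R | x < y < 1] \is a fin_num.
  by rewrite ge0_fin_numE ?(le_lt_trans hle) ?ltry // ltW.
rewrite /mfun_of opprK lnK; first by rewrite fineK.
by rewrite posrE -lte_fin fineK.
Qed.

Lemma mono_m (R : realType) (mu : probability R R) (x y : R) :
  (forall x : R, 0 <= x < 1 -> (0 < mu [set y : R | (x < y < 1)%R])%E) ->
  0 <= x -> x <= y -> y < 1 -> mfun_of mu x <= mfun_of mu y.
Proof.
move=> hpos x0 xy y1.
have hx := hpos x ltac:(apply/andP; split; lra).
have hy := hpos y ltac:(apply/andP; split; lra).
have : (mu [set z : R | (y < z < 1)%R] <= mu [set z : R | (x < z < 1)%R])%E.
  apply: le_measure; rewrite ?inE ?set_oo; try exact: measurable_itv.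
  by move=> z /=; rewrite !in_itv /= => /andP[yz ->]; rewrite andbT (le_lt_trans xy).
rewrite (mu_expR hx) (mu_expR hy) lee_fin ler_expR; lra.
Qed.



Lemma m0 (R : realType) (mu : probability R R) :
  mu [set y : R | 0 < y < 1] = 1%E -> mfun_of mu 0 = 0.
Proof. by move=> h; rewrite /mfun_of h /= ln1 oppr0. Qed.

Lemma inj_m (R : realType) (mu : probability R R) (m1 : R -> R) (x y : R) :
  (forall x : R, 0 <= x < 1 -> (0 < mu [set y : R | (x < y < 1)%R])%E) ->
  (forall x : R, 0 < x < 1 -> is_derive x 1 (mfun_of mu) (m1 x)) ->
  (forall x : R, 0 <= x < 1 -> 0 < m1 x) ->
  0 <= x < 1 -> 0 <= y < 1 -> mfun_of mu x = mfun_of mu y -> x = y.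
Proof.
move=> hpos hd hm /andP[x0 x1] /andP[y0 y1] e.
have key : forall a b : R, 0 <= a -> a < b -> b < 1 -> mfun_of mu a < mfun_of mu b.
  move=> a b a0 ab b1.
  have h1 : mfun_of mu a <= mfun_of mu ((a + b) / 2).
    apply: mono_m => //; lra.
  have h2 : mfun_of mu ((a + b) / 2) < mfun_of mu b.
    apply: (@strict01 R (mfun_of mu) m1) => //; lra.
  exact: le_lt_trans h1 h2.
case: (ltgtP x y) => // hxy.
  by have := key x y x0 hxy y1; rewrite e ltxx.
by have := key y x y0 hxy x1; rewrite e ltxx.
Qed.

Lemma ginv (R : realType) (mu : probability R R) (m1 g : R -> R) (y : R) :
  mu [set y : R | 0 < y < 1] = 1%E ->
  (forall x : R, 0 <= x < 1 -> (0 < mu [set y : R | (x < y < 1)%R])%E) ->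
  (forall x : R, 0 < x < 1 -> is_derive x 1 (mfun_of mu) (m1 x)) ->
  (forall x : R, 0 <= x < 1 -> 0 < m1 x) ->
  (forall y : R, 0 <= y -> 0 <= g y < 1 /\ mfun_of mu (g y) = y) ->
  0 < y -> 0 < g y < 1 /\ derive1 g y = (m1 (g y))^-1.
Proof.
move=> h01 hpos hd hm hg y0.
have [/andP[c0 c1] mc] := hg y (ltW y0).
have cpos : 0 < g y.
  rewrite lt_neqAle c0 andbT; apply/eqP => c00.
  by move: mc; rewrite -c00 m0 // => e; move: y0; rewrite -e ltxx.
have cin : g y \in `]0, 1[ by rewrite in_itv /= cpos c1.
split; first by rewrite cpos c1.
have near01 := near_in_itvoo cin.
have hcan : {near g y, cancel (mfun_of mu) g}.
  apply: filterS near01 => z; rewrite in_itv /= => /andP[z0 z1].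
  have mz0 : 0 <= mfun_of mu z.
    by rewrite -(m0 h01); apply: mono_m => //; lra.
  have [/andP[a0 a1] ma] := hg _ mz0.
  apply: (inj_m hpos hd hm) => //; apply/andP; split => //; lra.
have hcont : {near g y, continuous (mfun_of mu)}.
  apply: filterS near01 => z; rewrite in_itv /= => /andP[z0 z1].
  apply/differentiable_continuous/derivable1_diffP.
  apply: (@ex_derive _ _ _ _ _ _ (m1 z)); apply: hd; by rewrite z0 z1.
have hder : is_derive (g y) 1 (mfun_of mu) (m1 (g y)) by apply: hd; rewrite cpos c1.
have m1ne : m1 (g y) != 0 by rewrite gt_eqF // hm // c0 c1.
have := is_derive_inverse hcan hcont hder m1ne.
rewrite mc => hid.
by rewrite derive1E; apply: derive_val.
Qed.

Lemma expR_half (R : realType) (x : R) : 0 < x <= 1 -> expR (x / 2) <= 1 + x.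
Proof.
move=> /andP[x0 x1].
have h1 := expR_ge1Dx (- (x / 2)).
have h2 : expR (x / 2) * expR (- (x / 2)) = 1 by rewrite -expRD subrr expR0.
have h3 := expR_gt0 (x / 2).
nra.
Qed.

Lemma harm (R : realType) (a : R) (K : nat) : 0 < a ->
  \sum_(i < K) (if (a <= i%:R) && (0 < i)%N then (i%:R : R)^-1 else 0)
    <= 2 * Num.max 0 (ln (K%:R : R) - ln a).
Proof.
move=> a0; elim: K => [|K IH].
  by rewrite big_ord0; apply: mulr_ge0 => //; rewrite le_max lexx.
rewrite big_ord_recr /=.
case: ifP => [/andP[aK K0] | _].
  have Kpos : (0 : R) < K%:R by rewrite ltr0n.
  have lnKa : ln a <= ln (K%:R : R) by rewrite ler_ln // posrE.
  move: IH; rewrite (@max_r _ _ 0) ?subr_ge0 // => IH.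
  have hx : 0 < (K%:R : R)^-1 <= 1.
    by rewrite invr_gt0 Kpos /= invf_le1 // ler1n.
  have he := expR_half hx.
  have hln : ln (K%:R : R) + (K%:R)^-1 / 2 <= ln (K.+1%:R : R).
    rewrite -[X in X <= _]expRK ler_ln ?posrE ?expR_gt0 ?ltr0n //.
    rewrite expRD lnK ?posrE //.
    apply: le_trans (ler_wpM2l (ltW Kpos) he) _.
    by rewrite mulrDr mulr1 mulfV ?gt_eqF // -natr1.
  have : 2 * (ln (K.+1%:R : R) - ln a) <= 2 * Num.max 0 (ln (K.+1%:R : R) - ln a).
    by apply: ler_wpM2l => //; rewrite le_max lexx orbT.
  lra.
rewrite addr0; apply: le_trans IH _; apply: ler_wpM2l => //.
rewrite ge_max le_max lexx /= le_max; apply/orP; right.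
rewrite lerD2r.
case: K => [|K]; first by rewrite ln0 // ln1.
by rewrite ler_ln ?posrE ?ltr0n // ler_nat.
Qed.

Unset Implicit Arguments. Set Strict Implicit.


Lemma restr01 (R : realType) (mu : probability R R) (B : set R) :
  mu [set y : R | 0 < y < 1] = 1%E -> measurable B ->
  mu B = mu (B `&` [set y : R | 0 < y < 1]).
Proof.
set U := [set y : R | 0 < y < 1].
move=> h01 mB.
have mU : measurable U by rewrite /U set_oo; exact: measurable_itv.
rewrite (measureDI mu mB mU).
rewrite [X in (X + _)%E](_ : _ = 0%E) ?add0e //.
apply/eqP; rewrite eq_le measure_ge0 andbT.
have : (mu (B `\` U)%classic <= mu (~` U)%classic)%E.
  apply: le_measure; rewrite ?inE; first exact: measurableD.
    exact: measurableC.
  by move=> z [].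
by rewrite probability_setC // h01 subee.
Qed.

Lemma main_part (R : realType) (lambda : R) (mu : probability R R)
  (m1 m2 : R -> R) (g : R -> R) (xt : R -> R)
  (d : measure_display) (T : measurableType d) (P : probability T R)
  (F : nat -> T -> R) :
  0 < lambda ->
  mu [set y : R | 0 < y < 1] = 1%E ->
  (forall x : R, 0 <= x < 1 -> (0 < mu [set y : R | (x < y < 1)%R])%E) ->
  (forall x : R, 0 < x < 1 -> is_derive x 1 (mfun_of mu) (m1 x)) ->
  (forall x : R, 0 < x < 1 -> is_derive x 1 m1 (m2 x)) ->
  (forall x : R, 0 <= x < 1 -> 0 < m1 x) ->
  (forall x : R, 0 <= x < 1 -> 0 < m2 x) ->
  (forall y : R, 0 <= y -> 0 <= g y < 1 /\ mfun_of mu (g y) = y) ->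
  iid_with_law P F mu ->
  forall eps v : R, 0 < eps -> 0 < v ->
  exists kappa : R, 0 < kappa /\
    forall t,
      ((1 - eps)%:E <=
       P [set w : T | forall n : nat,
            (n_of lambda xt t (- v) <= n%:R <= n_of lambda xt t v ->
            (F n w - g (ln (n%:R * Num.sqrt (sigma_of xt t)))) /
              derive1 g (ln (n%:R * Num.sqrt (sigma_of xt t))) <= kappa)%R])%E.
Proof.
move=> hl h01 hpos hd1 hd2 hm1 hm2 hg [hFm [hFlaw _]] eps v he hv.
pose d0 := derive1 g 0.
pose C := 2 + 4 * lambda * v.
have Cpos : 0 < C by rewrite /C; have := mulr_gt0 hl hv; nra.
pose kappa := `|d0|^-1 + `|ln (C / eps)| + 1.
have hd0 : 0 <= `|d0|^-1 by rewrite invr_ge0.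
have hlnab : 0 <= `|ln (C / eps)| by [].
have kpos : 0 < kappa by rewrite /kappa; lra.
have hexpk : expR (- kappa) * C <= eps.
  have : expR (- kappa) <= expR (- ln (C / eps)).
    rewrite ler_expR; have := ler_norm (ln (C / eps)); rewrite /kappa; lra.
  rewrite expRN lnK ?posrE ?divr_gt0 // invf_div => h.
  have := ler_wpM2r (ltW Cpos) h; rewrite divfK ?gt_eqF //.
exists kappa; split => // t.
set sig := sigma_of xt t.
set s := Num.sqrt sig.
have sig1 : 1 <= sig by rewrite /sig /sigma_of le_max lexx.
have s1 : 1 <= s by rewrite /s -(@sqrtr1 R) ler_wsqrtr.
have s0 : 0 < s by lra.
set N1 := n_of lambda xt t (- v).
set N2 := n_of lambda xt t v.
have N1pos : 0 < N1 by exact: expR_gt0.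
have N2ge1 : 1 <= N2.
  rewrite /N2 /n_of -/sig -/s -expR0 ler_expR; apply: mulr_ge0; first lra.
  have := mulr_gt0 hv s0; lra.
pose y := fun n : nat => ln (n%:R * s).
pose S := fun n : nat => [set x : R | kappa < (x - g (y n)) / derive1 g (y n)].
pose inr := fun n : nat => N1 <= n%:R <= N2.
pose K := (Num.truncn N2).+1.
pose A := fun n : nat => [set w | inr n /\ S n (F n w)].
have mS : forall n, measurable (S n).
  move=> n.
  have hc : continuous (fun x : R => (x - g (y n)) / derive1 g (y n)).
    move=> x; apply: cvgM; last exact: cvg_cst.
    by apply: cvgB; [exact: cvg_id | exact: cvg_cst].
  have := measurable_realfun.continuous_measurable_fun hc measurableT (measurable_itv `]kappa, +oo[).
  rewrite setTI; congr measurable; apply/seteqP; split => z;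
    by rewrite /S /= in_itv /= andbT.
have AE : forall n, A n = if asbool (inr n) then (F n @^-1` S n)%classic else set0.
  move=> n; case: asboolP => h; apply/seteqP; split => w /=.
  - by case.
  - by move=> hs; split.
  - by case.
  - by [].
have mA : forall n, measurable (A n).
  move=> n; rewrite AE; case: asboolP => _; last exact: measurable0.
  by have := hFm n measurableT (S n) (mS n); rewrite setTI.
set U := \big[setU/set0]_(i < K) A i.
have mU : measurable U by apply: bigsetU_measurable => i _; exact: mA.
match goal with |- context [@mkset _ ?X] => have -> : mkset X = (~` U)%classic end.
  rewrite /U -bigcup_mkord; apply/seteqP; split => w /=.
  - move=> hw [i _ [hi hS]]; have := hw i hi.
    by rewrite leNgt; move: hS; rewrite /S /y /s /sig /= => ->.
  - move=> hU n hn; rewrite leNgt; apply/negP => hlt; apply: hU; exists n; last first.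
      by split.
    rewrite /=.
    move: hn => /andP[_ hN].
    have := truncn_itv (ltW (lt_le_trans ltr01 N2ge1)).
    move=> /andP[_ hlt2]; rewrite -(ltr_nat R); exact: le_lt_trans hN hlt2.
rewrite probability_setC //.
pose c0 := expR (- kappa) / s.
have c0pos : 0 <= c0 by rewrite /c0 divr_ge0 // ?expR_ge0 // ltW.
pose h := fun i : nat => if (N1 <= i%:R) && (0 < i)%N then (i%:R : R)^-1 else 0.
have hpos' : forall i, 0 <= h i.
  by move=> i; rewrite /h; case: ifP => _ //; rewrite invr_ge0 ler0n.
have hU01 : measurable [set y : R | 0 < y < 1] by rewrite set_oo; exact: measurable_itv.
have hb : forall i, (P (A i) <= (c0 * h i)%:E)%E.
  move=> i; rewrite AE; case: asboolP => hi; last first.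
    by rewrite measure0 lee_fin mulr_ge0.
  rewrite hFlaw // restr01 //.
  case: (lerP (y i) 0) => hy.
    have y0 : y i = 0.
      apply/eqP; rewrite eq_le hy /=; rewrite /y.
      case: (i) => [|j]; first by rewrite mul0r ln0.
      apply: ln_ge0; have : (1 : R) <= j.+1%:R by rewrite ler1n.
      nra.
    rewrite (_ : (S i `&` _)%classic = set0); first by rewrite measure0 lee_fin mulr_ge0.
    apply/seteqP; split => z //= [hz /andP[z0 z1]]; exfalso.
    move: hz; rewrite /S /=; rewrite -/(y i) y0 -/d0 => hz.
    have [/andP[g0 g1] _] := hg 0 (lexx 0).
    have : (z - g 0) / d0 <= `|d0|^-1.
      apply: le_trans (ler_norm _) _; rewrite normrM normfV.
      apply: ler_piMl => //; rewrite ler_norml; apply/andP; split; lra.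
    move: hz; rewrite /kappa; lra.
  have [/andP[cpos c1] dg] := ginv h01 hpos hd1 hm1 hg hy.
  have hipos : (0 < i)%N.
    move: hy; rewrite /y; case: (i) => // ; rewrite mul0r ln0 // ltxx //.
  have hh : h i = (i%:R)^-1 by rewrite /h; move: hi => /andP[-> _]; rewrite hipos.
  have m1c : 0 < m1 (g (y i)) by apply: hm1; rewrite (ltW cpos) c1.
  pose x0 := g (y i) + kappa * (m1 (g (y i)))^-1.
  have kd : 0 < kappa * (m1 (g (y i)))^-1 by rewrite mulr_gt0 // invr_gt0.
  have sub : (S i `&` [set y : R | 0 < y < 1] `<=` [set z : R | x0 < z < 1])%classic.
    move=> z [hz /andP[_ z1]]; move: hz; rewrite /S /=; rewrite -/(y i) dg invrK => hz.
    have : kappa * (m1 (g (y i)))^-1 < z - g (y i) by rewrite ltr_pdivrMr.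
    rewrite /x0; move=> hk; apply/andP; split => //; lra.
  have heq : c0 * h i = expR (- kappa - y i).
    rewrite hh /c0 expRD expRN /y lnK ?posrE ?mulr_gt0 ?ltr0n //.
    by rewrite invfM -mulrA [s^-1 * _]mulrC.
  rewrite heq.
  case: (ltP x0 1) => hx01; last first.
    rewrite (_ : (S i `&` _)%classic = set0); first by rewrite measure0 lee_fin expR_ge0.
    apply/seteqP; split => z //= hz; have := sub z hz => /= /andP[a b]; lra.
  apply: le_trans (le_measure _ _ _ sub) _.
  - by rewrite inE; apply: measurableI.
  - by rewrite inE set_oo; exact: measurable_itv.
  have hx00 : 0 <= x0 by rewrite /x0; lra.
  rewrite [X in (X <= _)%E](_ : _ = (expR (- mfun_of mu x0))%:E); last by apply: mu_expR; apply: hpos; rewrite hx00 hx01.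
  rewrite lee_fin ler_expR.
  have ht := @tangent01 R (mfun_of mu) m1 m2 (g (y i)) x0 cpos ltac:(rewrite /x0; lra) hx01 hd1 hd2 hm2.
  have [_ mc] := hg (y i) (ltW hy).
  move: ht; rewrite mc /x0 addrAC subrr add0r mulrA mulrAC mulfV ?gt_eqF // mul1r.
  lra.
have PU : (P U <= eps%:E)%E.
  apply: le_trans (@Boole_inequality _ _ _ P A K (fun i _ => mA i)) _.
  apply: le_trans; first (apply: lee_sum => i _; exact: hb).
  rewrite sumEFin lee_fin -mulr_sumr.
  have hs := harm K N1pos.
  apply: le_trans (ler_wpM2l c0pos hs) _.
  have lnN1 : ln N1 = lambda * (sig - v * s).
    by rewrite /N1 /n_of expRK -/sig -/s mulNr.
  have lnN2 : ln N2 = lambda * (sig + v * s).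
    by rewrite /N2 /n_of expRK -/sig -/s.
  have N2pos : 0 < N2 by lra.
  have hK : ln (K%:R : R) <= ln (N2 + 1).
    rewrite ler_ln ?posrE ?ltr0n //; last by lra.
    have := truncn_itv (ltW N2pos); move=> /andP[hle _].
    by rewrite /K -natr1 lerD2r.
  have hN2 : ln (N2 + 1) <= ln N2 + 1.
    have -> : N2 + 1 = N2 * (1 + N2^-1) by rewrite mulrDr mulr1 mulfV ?gt_eqF.
    rewrite lnM ?posrE //; last by rewrite addr_gt0 ?invr_gt0.
    have := @le_ln1Dx R (N2^-1) ltac:(have : 0 < N2^-1 by rewrite invr_gt0; lra).
    have : N2^-1 <= 1 by rewrite invf_le1.
    lra.
  have hvs : 0 < lambda * v * s by rewrite !mulr_gt0.
  have hM : Num.max 0 (ln (K%:R : R) - ln N1) <= 1 + 2 * (lambda * v * s).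
    rewrite ge_max; apply/andP; split; first lra.
    rewrite lnN1; move: hK hN2; rewrite lnN2; lra.
  have h1 : c0 * (2 * Num.max 0 (ln (K%:R : R) - ln N1)) <= c0 * (2 * (1 + 2 * (lambda * v * s))).
    by apply: ler_wpM2l => //; apply: ler_wpM2l.
  have h2 : c0 * (2 * (1 + 2 * (lambda * v * s))) = expR (- kappa) * (2 / s + 4 * lambda * v).
    by rewrite /c0; field; rewrite gt_eqF.
  have h3 : 2 / s <= 2 by rewrite ler_pdivrMr //; lra.
  have h4 : expR (- kappa) * (2 / s + 4 * lambda * v) <= expR (- kappa) * C.
    by apply: ler_wpM2l; [exact: expR_ge0 | rewrite /C; lra].
  lra.
have PU0 := measure_ge0 P U.
have fU : P U \is a fin_num by rewrite ge0_fin_numE // (le_lt_trans PU) ?ltry.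
move: PU PU0; rewrite -(fineK fU) !lee_fin => PU PU0.
lra.
Qed.

Theorem lemma16 (R : realType) (lambda : R) (mu : probability R R)
  (m1 m2 : R -> R) (varkappa : R) (g : R -> R) (xt : R -> R)
  (d : measure_display) (T : measurableType d) (P : probability T R)
  (F : nat -> T -> R) :
  0 < lambda ->
  (* mu is a probability distribution on (0,1) *)
  mu [set y : R | 0 < y < 1] = 1%E ->
  (* m is real-valued on [0,1) *)
  (forall x : R, 0 <= x < 1 -> (0 < mu [set y : R | (x < y < 1)%R])%E) ->
  (* m twice differentiable on [0,1) (one-sided at 0), m' = m1, m'' = m2 *)
  (forall x : R, 0 < x < 1 -> is_derive x 1 (mfun_of mu) (m1 x)) ->
  (forall x : R, 0 < x < 1 -> is_derive x 1 m1 (m2 x)) ->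
  (fun h : R => h^-1 * (mfun_of mu h - mfun_of mu 0)) @ 0^'+ --> m1 0 ->
  (fun h : R => h^-1 * (m1 h - m1 0)) @ 0^'+ --> m2 0 ->
  (forall x : R, 0 <= x < 1 -> 0 < m1 x) ->
  (forall x : R, 0 <= x < 1 -> 0 < m2 x) ->
  (fun x : R => m2 x / (m1 x) ^+ 2) @ 1^'- --> 0 ->
  0 < varkappa ->
  (fun x : R => m2 x * mfun_of mu x * x / (m1 x) ^+ 2) @ 1^'- --> varkappa ->
  (fun x : R => mfun_of mu x / m1 x) @ 1^'- --> 0 ->
  (* g = m^{-1} : [0,oo) -> [0,1) *)
  (forall y : R, 0 <= y -> 0 <= g y < 1 /\ mfun_of mu (g y) = y) ->
  (* for large t, x_t is the unique solution in [0,t) of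
     (log g)'(lambda x) = 1 / (lambda (t - x)) *)
  (\forall t \near +oo,
     (0 <= xt t < t /\
      derive1 (fun u : R => ln (g u)) (lambda * xt t) = (lambda * (t - xt t))^-1) /\
     (forall y : R, 0 <= y < t ->
        derive1 (fun u : R => ln (g u)) (lambda * y) = (lambda * (t - y))^-1 -> y = xt t)) ->
  (* (F_n) i.i.d. with law mu *)
  iid_with_law P F mu ->
  forall eps v : R, 0 < eps -> 0 < v ->
  exists kappa : R, 0 < kappa /\
    \forall t \near +oo,
      ((1 - eps)%:E <=
       P [set w : T | forall n : nat,
            (n_of lambda xt t (- v) <= n%:R <= n_of lambda xt t v ->
            (F n w - g (ln (n%:R * Num.sqrt (sigma_of xt t)))) /
              derive1 g (ln (n%:R * Num.sqrt (sigma_of xt t))) <= kappa)%R])%E.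

Proof.
move=> hl h01 hpos hd1 hd2 _ _ hm1 hm2 _ _ _ _ hg _ hiid eps v he hv.
have [kappa [kp H]] := @main_part R lambda mu m1 m2 g xt d T P F hl h01 hpos hd1 hd2 hm1 hm2 hg hiid eps v he hv.
exists kappa; split => //.
exact: nearW.
Qed.
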